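(* Fix integers $N\ge 2$ and $K\ge 1$. For any Boolean tensor $\mathcal{B}\in\{0,1\}^{N\times N\times K}$ with frontal slices $\mathbf{B}_1,\dots,\mathbf{B}_K$, and any $r\in\mathbb{N}^+$ with \[ r\ge\min\Big\{2KN+1,\;4\sum_{k=1}^K\mathrm{rrank}(\mathbf{B}_k)+1\Big\},\] the set $\pi(\mathcal{M}^{\text{HolE}}_r)$ contains a ranking tensor consistent with $\mathcal{B}$.
   Context: A score-based model assigns a score $s_k(i,j)\in\mathbb{R}$ to each triple, $i,j\in\{1,\dots,N\}$, $k\in\{1,\dots,K\}$; its scoring tensor has frontal slices $\mathbf{S}_k$ with $[\mathbf{S}_k]_{ij}=s_k(i,j)$. For a real $N\times N$ matrix $\mathbf{S}$, $\pi(\mathbf{S})$ is the matrix of dense ranks: $\pi_{ij}(\mathbf{S})=1+$ (number of distinct values among entries of $\mathbf{S}$ strictly larger than $s_{ij}$). For tensors, $\pi$ acts slicewise; for a set $X$, $\pi(X)=\{\pi(x):x\in X\}$. HolE of size $r$: parameters $\mathbf{A}\in\mathbb{R}^{N\times r}$ (rows $\mathbf{a}_i$), $\mathbf{R}\in\mathbb{R}^{K\times r}$ (rows $\mathbf{r}_k$), score $\mathbf{r}_k^T(\mathbf{a}_i\star\mathbf{a}_j)$ where $(\mathbf{a}\star\mathbf{b})_m=\sum_{t=1}^r a_t\, b_{((m+t-2)\bmod r)+1}$ is circular correlation; $\mathcal{M}^{\text{HolE}}_r$ is the set of scoring tensors of such models. A ranking tensor $\mathcal{P}$ is consistent with $\mathcal{B}$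 if for every $k$ and all $i,j,i',j'$: $b_{ijk}=1$ and $b_{i'j'k}=0$ imply $p_{ijk}<p_{i'j'k}$. Rounding rank: $\mathrm{round}$ maps each entry $x$ of a real matrix to $1$ if $x\ge 1/2$ and to $0$ otherwise; for $\mathbf{B}\in\{0,1\}^{m\times n}$, $\mathrm{rrank}(\mathbf{B})=\min\{\mathrm{rank}(\mathbf{A}):\mathbf{A}\in\mathbb{R}^{m\times n},\ \mathrm{round}(\mathbf{A})=\mathbf{B}\}$. *)

(* Defs.v *)
From HB Require Import structures.
From mathcomp Require Import all_boot all_order all_algebra.
From mathcomp Require Import boolp reals.
Set Implicit Arguments. Unset Strict Implicit. Unset Printing Implicit Defensive.
Import Order.TTheory GRing.Theory Num.Theory.
Local Open Scope ring_scope.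

Section Defs.
Variable R : realType.

Definition round_mx m n (A : 'M[R]_(m, n)) : 'M[bool]_(m, n) :=
  map_mx (fun x => (1 / 2 <= x)) A.

Definition rrank_pred m n (B : 'M[bool]_(m, n)) (k : nat) : bool :=
  `[< exists A : 'M[R]_(m, n), round_mx A = B /\ \rank A = k >].

Lemma rrank_ex m n (B : 'M[bool]_(m, n)) : exists k, rrank_pred B k.
Proof.
exists (\rank (map_mx (fun b : bool => (b : nat)%:R : R) B)).
apply/asboolP; exists (map_mx (fun b : bool => (b : nat)%:R : R) B); split => //.
apply/matrixP => i j; rewrite !mxE.
case: (B i j) => /=.
- by rewrite ler_pdivrMr // mul1r ler1n.
- by apply/negbTE; rewrite -ltNge divr_gt0.
Qed.

Definition rrank m n (B : 'M[bool]_(m, n)) : nat := ex_minn (rrank_ex B).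

(* 0-indexed access into a length-r vector (default 0, never used when the
   index is < r) *)
Definition vget r (b : 'I_r -> R) (k : nat) : R :=
  if insub k is Some j then b j else 0.

(* circular correlation, 0-indexed: (a * b)_m = sum_t a_t b_{(m+t) mod r},
   which is the paper's 1-indexed formula b_{((m+t-2) mod r)+1} *)
Definition ccorr r (a b : 'I_r -> R) (m : 'I_r) : R :=
  \sum_(t < r) a t * vget b ((m + t) %% r).

Definition holE_tensor N K r (A : 'M[R]_(N, r)) (Rm : 'M[R]_(K, r))
  : 'I_K -> 'M[R]_N :=
  fun k => \matrix_(i < N, j < N)
     \sum_(m < r) Rm k m * ccorr (fun t => A i t) (fun t => A j t) m.

Definition is_HolE N K r (S : 'I_K -> 'M[R]_N) : Prop :=
  exists (A : 'M[R]_(N, r)) (Rm : 'M[R]_(K, r)), S = holE_tensor A Rm.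

Definition dense_rank N (S : 'M[R]_N) : 'M[nat]_N :=
  \matrix_(i < N, j < N)
    (1 + size (undup [seq S p.1 p.2 | p <- enum [set: 'I_N * 'I_N]
                                    & (S i j < S p.1 p.2)%R]))%N.

Definition pi_tensor N K (S : 'I_K -> 'M[R]_N) : 'I_K -> 'M[nat]_N :=
  fun k => dense_rank (S k).

Definition in_pi_HolE N K r (P : 'I_K -> 'M[nat]_N) : Prop :=
  exists S : 'I_K -> 'M[R]_N, is_HolE r S /\ P = pi_tensor S.

End Defs.

Definition consistent N K (B : 'I_K -> 'M[bool]_N) (P : 'I_K -> 'M[nat]_N)
  : Prop :=
  forall (k : 'I_K) (i j i' j' : 'I_N),
    B k i j = true -> B k i' j' = false -> (P k i j < P k i' j')%N.

(* Main.v *)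
Require Import Defs.
From HB Require Import structures.
From mathcomp Require Import all_boot all_order all_algebra.
From mathcomp Require Import boolp reals trigo.
From mathcomp Require Import ring lra zify.
Import Order.TTheory GRing.Theory Num.Theory.
Local Open Scope ring_scope.

Section Trig.
Variable R : realType.

Lemma per_sin (x : R) (a b : nat) : sin (x + pi *+ 2 * (a%:R - b%:R)) = sin x.
Proof.
have -> : x + pi *+ 2 * (a%:R - b%:R) = (x - (pi *+ 2) *+ b) + (pi *+ 2) *+ a.
  by ring.
rewrite (periodicn (@sinD2pi R)).
by rewrite -[in RHS](subrK ((pi *+ 2) *+ b) x) (periodicn (@sinD2pi R)).
Qed.
Lemma sin_ne0 (r a b : nat) : (0 < r)%N -> a != b -> (a < b + r)%N -> (b < a + r)%N ->
  sin (pi * ((a%:R - b%:R) / r%:R) : R) != 0.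
Proof.
move=> r0 ab h1 h2.
have rp : (0 : R) < r%:R by rewrite ltr0n.
have hp := @pi_gt0 R.
have aux : forall x y : nat, (x < y)%N -> (y < x + r)%N ->
   0 < sin (pi * ((y%:R - x%:R) / r%:R) : R).
  move=> x y hxy hyx.
  have hxy' : (x%:R : R) < y%:R by rewrite ltr_nat.
  have hyx' : (y%:R : R) < x%:R + r%:R by rewrite -natrD ltr_nat.
  apply/sin_gt0_pi; apply/andP; split.
    by apply: mulr_gt0 => //; apply: divr_gt0 => //; rewrite subr_gt0.
  rewrite -[X in _ < X]mulr1 ltr_pM2l // ltr_pdivrMr // mul1r.
  by rewrite ltrBlDr addrC.
case: (ltngtP a b) ab => // hab _.
- rewrite -[X in sin X]opprK sinN oppr_eq0 -mulrN -mulNr opprB.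
  by apply/lt0r_neq0/aux.
- by apply/lt0r_neq0/aux.
Qed.
Lemma sum_cos0 (r a b : nat) (phi : R) : (0 < r)%N -> a != b ->
  (a < b + r)%N -> (b < a + r)%N ->
  \sum_(t < r) cos (pi *+ 2 * ((a%:R - b%:R) / r%:R) * t%:R + phi) = 0.
Proof.
move=> r0 ab h1 h2.
have hs := @sin_ne0 r a b r0 ab h1 h2.
have rn0 : (r%:R : R) != 0 by rewrite pnatr_eq0 -lt0n.
set th := (a%:R - b%:R) / r%:R in hs *.
pose g (t : nat) := sin (pi *+ 2 * th * t%:R + phi - pi * th).
have key : forall t : nat, cos (pi *+ 2 * th * t%:R + phi) * (sin (pi * th) *+ 2)
   = g t.+1 - g t.
  move=> t; rewrite /g.
  have -> : pi *+ 2 * th * t.+1%:R + phi - pi * th = (pi *+ 2 * th * t%:R + phi) + pi * th.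
    by rewrite -natr1; ring.
  by rewrite sinD sinB; ring.
have hs2 : sin (pi * th) *+ 2 != 0.
  by rewrite -mulr_natr mulf_neq0 // pnatr_eq0.
apply: (mulIf hs2); rewrite mul0r mulr_suml.
rewrite (eq_bigr (fun t : 'I_r => g t.+1 - g t)); last by move=> t _; exact: key.
rewrite -(big_mkord xpredT (fun t => g t.+1 - g t)) telescope_sumr //.
rewrite /g mulr0 add0r.
have -> : pi *+ 2 * th * r%:R + phi - pi * th = (phi - pi * th) + pi *+ 2 * (a%:R - b%:R).
  rewrite /th; field => //.
by rewrite per_sin subrr.
Qed.
End Trig.

Section Planes.
Variable R : realType.
Variables (r : nat) (T : finType).
Hypothesis hT : (2 * #|T| < r)%N.

Definition fr (p : T) : nat := (enum_rank p).+1.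
Definition th (p : T) : R := pi *+ 2 * ((fr p)%:R / r%:R).

Lemma fr_le p : (fr p <= #|T|)%N.
Proof. by rewrite /fr ltn_ord. Qed.

Lemma r_gt0 : (0 < r)%N.
Proof. by move: hT; case: r. Qed.

Lemma cos_prod x y : cos x * cos y = (cos (x - y) + cos (x + y)) / 2 :> R.
Proof. by rewrite cosB cosD; field. Qed.

Lemma master p q (psi phi : R) :
  \sum_(t < r) cos (th p * t%:R + psi) * cos (th q * t%:R + phi)
  = (p == q)%:R * (r%:R / 2 * cos (phi - psi)).
Proof.
have hp := fr_le p; have hq := fr_le q.
have r0 := r_gt0.
have hp1 : (0 < fr p)%N by []. have hq1 : (0 < fr q)%N by [].
under eq_bigr => t _ do rewrite cos_prod.
rewrite -mulr_suml big_split /=.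
have -> : \sum_(t < r) cos (th p * t%:R + psi + (th q * t%:R + phi)) = 0.
  transitivity (\sum_(t < r) cos (pi *+ 2 * (((fr p + fr q)%N%:R - (0%N)%:R) / r%:R) * t%:R + (psi + phi))).
    apply: eq_bigr => t _; congr cos; rewrite /th natrD; ring.
  apply: sum_cos0; lia.
rewrite addr0.
case: eqP => [<-|/eqP pq].
  under eq_bigr => t _ do rewrite opprD addrACA subrr add0r.
  by rewrite sumr_const card_ord -[_ *+ r]mulr_natl -opprB cosN /= mul1r; field.
suff -> : \sum_(t < r) cos (th p * t%:R + psi - (th q * t%:R + phi)) = 0 by rewrite mul0r mulr0n mul0r.
transitivity (\sum_(t < r) cos (pi *+ 2 * (((fr p)%:R - (fr q)%:R) / r%:R) * t%:R + (psi - phi))).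
  apply: eq_bigr => t _; congr cos; rewrite /th; ring.
apply: sum_cos0; try lia.
by apply: contra pq => /eqP [] /val_inj/enum_rank_inj ->.
Qed.

Lemma O_cc p q (phi : R) : \sum_(t < r) cos (th p * t%:R) * cos (th q * t%:R + phi)
  = (p == q)%:R * (r%:R / 2 * cos phi).
Proof.
transitivity (\sum_(t < r) cos (th p * t%:R + 0) * cos (th q * t%:R + phi)).
  by apply: eq_bigr => t _; rewrite addr0.
by rewrite master subr0.
Qed.

Lemma O_cs p q (phi : R) : \sum_(t < r) cos (th p * t%:R) * sin (th q * t%:R + phi)
  = (p == q)%:R * (r%:R / 2 * sin phi).
Proof.
transitivity (\sum_(t < r) cos (th p * t%:R + 0) * cos (th q * t%:R + (phi - pi / 2))).
  by apply: eq_bigr => t _; rewrite addr0 addrA cosBpihalf.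
by rewrite master subr0 cosBpihalf.
Qed.

Lemma O_sc p q (phi : R) : \sum_(t < r) sin (th p * t%:R) * cos (th q * t%:R + phi)
  = (p == q)%:R * (r%:R / 2 * - sin phi).
Proof.
transitivity (\sum_(t < r) cos (th p * t%:R + - (pi / 2)) * cos (th q * t%:R + phi)).
  by apply: eq_bigr => t _; rewrite cosBpihalf.
by rewrite master opprK cosDpihalf.
Qed.

Lemma O_ss p q (phi : R) : \sum_(t < r) sin (th p * t%:R) * sin (th q * t%:R + phi)
  = (p == q)%:R * (r%:R / 2 * cos phi).
Proof.
transitivity (\sum_(t < r) cos (th p * t%:R + - (pi / 2)) * cos (th q * t%:R + (phi - pi / 2))).
  by apply: eq_bigr => t _; rewrite addrA !cosBpihalf.
by rewrite master opprK subrK.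
Qed.

Lemma inner p q (a b c d phi : R) :
  \sum_(t < r) (a * cos (th p * t%:R) + b * sin (th p * t%:R)) *
               (c * cos (th q * t%:R + phi) + d * sin (th q * t%:R + phi))
  = (p == q)%:R * (r%:R / 2 * ((a * c + b * d) * cos phi + (a * d - b * c) * sin phi)).
Proof.
transitivity (\sum_(t < r) (a * c * (cos (th p * t%:R) * cos (th q * t%:R + phi))
  + a * d * (cos (th p * t%:R) * sin (th q * t%:R + phi))
  + b * c * (sin (th p * t%:R) * cos (th q * t%:R + phi))
  + b * d * (sin (th p * t%:R) * sin (th q * t%:R + phi)))).
  by apply: eq_bigr => t _; ring.
rewrite !big_split /= -!mulr_sumr O_cc O_cs O_sc O_ss; ring.
Qed.

Lemma sum_pick (p : T) (h : T -> R) : \sum_(q : T) (p == q)%:R * h q = h p.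
Proof.
rewrite (bigD1 p) //= eqxx mul1r big1 ?addr0 // => q /negbTE.
by rewrite eq_sym => ->; rewrite mul0r.
Qed.

Lemma sum_pick' (p : T) (h : T -> R) : \sum_(q : T) (q == p)%:R * h q = h p.
Proof. by under eq_bigr do rewrite eq_sym; rewrite sum_pick. Qed.

Lemma sum_prod3 (I J : finType) (n : nat) (X : I -> nat -> R) (Y : J -> nat -> R) :
  \sum_(m < n) (\sum_(i : I) X i m) * (\sum_(j : J) Y j m)
  = \sum_(i : I) \sum_(j : J) \sum_(m < n) X i m * Y j m.
Proof.
under eq_bigr do rewrite mulr_suml.
rewrite exchange_big; apply: eq_bigr => i _.
under eq_bigr do rewrite mulr_sumr.
by rewrite exchange_big.
Qed.

Variables (N K : nat) (al be : 'I_N -> T -> R) (CA CB : 'I_K -> T -> R).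

Definition G (i : 'I_N) (x : nat) : R :=
  \sum_(p : T) (al i p * cos (th p * x%:R) + be i p * sin (th p * x%:R)).

Definition Amat : 'M[R]_(N, r) := \matrix_(i, t) G i t.
Definition Rmat : 'M[R]_(K, r) := \matrix_(k, m)
  (4 / (r%:R ^+ 2) * \sum_(q : T) (CA k q * cos (th q * m%:R) + CB k q * sin (th q * m%:R))).

Lemma G_per i x : G i (x %% r) = G i x.
Proof.
have rn0 : (r%:R : R) != 0 by rewrite pnatr_eq0 -lt0n r_gt0.
apply: eq_bigr => p _.
have e : th p * x%:R = th p * (x %% r)%:R + (pi *+ 2) *+ (fr p * (x %/ r)).
  rewrite {1}(divn_eq x r) /th; field => //.
by rewrite e (periodicn (@cosD2pi R)) (periodicn (@sinD2pi R)).
Qed.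

Lemma vget_G j (x : nat) : vget (fun t => Amat j t) (x %% r) = G j x.
Proof.
rewrite /vget; case: insubP => [u _ hu|].
  by rewrite mxE hu G_per.
by rewrite ltn_pmod // r_gt0.
Qed.


Lemma ccorr_eq i j (m : 'I_r) :
  ccorr (fun t => Amat i t) (fun t => Amat j t) m = r%:R / 2 *
  \sum_(p : T) ((al i p * al j p + be i p * be j p) * cos (th p * m%:R)
               + (al i p * be j p - be i p * al j p) * sin (th p * m%:R)).
Proof.
rewrite /ccorr.
transitivity (\sum_(t < r) G i t * G j (m + t)).
  by apply: eq_bigr => t _; rewrite mxE vget_G.
rewrite /G (@sum_prod3 _ _ _ (fun p (t : nat) => al i p * cos (th p * t%:R) + be i p * sin (th p * t%:R))
   (fun q (t : nat) => al j q * cos (th q * (m + t)%:R) + be j q * sin (th q * (m + t)%:R))).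
rewrite mulr_sumr; apply: eq_bigr => p _.
transitivity (\sum_(q : T) (p == q)%:R * (r%:R / 2 * ((al i p * al j q + be i p * be j q) * cos (th q * m%:R)
     + (al i p * be j q - be i p * al j q) * sin (th q * m%:R)))); last by rewrite sum_pick.
apply: eq_bigr => q _; rewrite -inner; apply: eq_bigr => t _.
have e : th q * (m + t)%:R = th q * t%:R + th q * m%:R by rewrite natrD; ring.
by rewrite e.
Qed.

Lemma holE_eq k i j :
  holE_tensor Amat Rmat k i j =
  \sum_(p : T) ((al i p * al j p + be i p * be j p) * CA k p
               + (al i p * be j p - be i p * al j p) * CB k p).
Proof.
have rn0 : (r%:R : R) != 0 by rewrite pnatr_eq0 -lt0n r_gt0.
rewrite /holE_tensor mxE.
under eq_bigr do rewrite mxE ccorr_eq mulrACA.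
rewrite -mulr_sumr.
rewrite (@sum_prod3 _ _ _ (fun q (m : nat) => CA k q * cos (th q * m%:R) + CB k q * sin (th q * m%:R))
   (fun p (m : nat) => (al i p * al j p + be i p * be j p) * cos (th p * m%:R)
               + (al i p * be j p - be i p * al j p) * sin (th p * m%:R))).
rewrite exchange_big mulr_sumr; apply: eq_bigr => p _.
transitivity (4 / r%:R ^+ 2 * r%:R / 2 * \sum_(q : T) (q == p)%:R * (r%:R / 2 *
   ((CA k q * (al i p * al j p + be i p * be j p) + CB k q * (al i p * be j p - be i p * al j p)) * cos 0 +
    (CA k q * (al i p * be j p - be i p * al j p) - CB k q * (al i p * al j p + be i p * be j p)) * sin 0))).
  rewrite mulrA; congr (_ * _); apply: eq_bigr => q _; rewrite -inner.
  by apply: eq_bigr => t _; rewrite !addr0.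
by rewrite sum_pick' cos0 sin0; field.
Qed.

End Planes.

Lemma dr_lt (R : realType) N (S : 'M[R]_N) i j i' j' :
  S i' j' < S i j -> (dense_rank S i j < dense_rank S i' j')%N.
Proof.
move=> hlt; rewrite !mxE ltn_add2l.
set l1 := undup _; set l2 := undup _.
have h1 : uniq (S i j :: l1).
  rewrite /= undup_uniq andbT /l1 mem_undup; apply/negP => /mapP [p].
  by rewrite mem_filter => /andP [hp _] e; move: hp; rewrite -e ltxx.
have h2 : {subset S i j :: l1 <= l2}.
  move=> x; rewrite inE => /orP [/eqP ->|].
    rewrite /l2 mem_undup; apply/mapP; exists (i, j) => //.
    by rewrite mem_filter hlt /= mem_enum inE.
  rewrite /l1 /l2 !mem_undup => /mapP [p]; rewrite mem_filter => /andP [hp hp2] ->.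
  apply/mapP; exists p => //; rewrite mem_filter hp2 andbT.
  exact: lt_trans hlt hp.
exact: (uniq_leq_size h1 h2).
Qed.

Lemma consist (R : realType) N K r (B : 'I_K -> 'M[bool]_N) (S : 'I_K -> 'M[R]_N) :
  is_HolE r S ->
  (forall k i j i' j', B k i j = true -> B k i' j' = false -> S k i' j' < S k i j) ->
  exists P : 'I_K -> 'M[nat]_N, in_pi_HolE R r P /\ consistent B P.
Proof.
move=> hS hlt; exists (pi_tensor S); split; first by exists S.
move=> k i j i' j' h1 h2; exact: dr_lt (hlt _ _ _ _ _ h1 h2).
Qed.

Lemma planes_consist (R : realType) N K r (B : 'I_K -> 'M[bool]_N) (T : finType)
  (hT : (2 * #|T| < r)%N) (al be : 'I_N -> T -> R) (CA CB : 'I_K -> T -> R) :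
  (forall k i j i' j', B k i j = true -> B k i' j' = false ->
     \sum_(p : T) ((al i' p * al j' p + be i' p * be j' p) * CA k p
               + (al i' p * be j' p - be i' p * al j' p) * CB k p)
   < \sum_(p : T) ((al i p * al j p + be i p * be j p) * CA k p
               + (al i p * be j p - be i p * al j p) * CB k p)) ->
  exists P : 'I_K -> 'M[nat]_N, in_pi_HolE R r P /\ consistent B P.
Proof.
move=> H.
apply: (@consist R N K r B (holE_tensor (Amat R r T N al be) (Rmat R r T K CA CB))).
  by exists (Amat R r T N al be), (Rmat R r T K CA CB).
by move=> k i j i' j' h1 h2; rewrite !holE_eq //; apply: H.
Qed.

Lemma branchB (R : realType) N K (B : 'I_K -> 'M[bool]_N) r :
  (4 * (\sum_(k < K) rrank R (B k)) + 1 <= r)%N ->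
  exists P : 'I_K -> 'M[nat]_N, in_pi_HolE R r P /\ consistent B P.
Proof.
move=> hr.
have hA : forall k, exists A : 'M[R]_N, round_mx A = B k /\ \rank A = rrank R (B k).
  move=> k; rewrite /rrank; case: ex_minnP => d /asboolP hd _; exact: hd.
pose Ak k := sval (cid (hA k)).
have hAk : forall k, round_mx (Ak k) = B k /\ \rank (Ak k) = rrank R (B k).
  by move=> k; exact: (svalP (cid (hA k))).
pose T := ({k : 'I_K & 'I_(\rank (Ak k))} * bool)%type.
have hT : (2 * #|{: T}| < r)%N.
  rewrite card_prod card_bool card_tagged sumnE big_map big_enum /=.
  have -> : \sum_(i in 'I_K) #|{: 'I_(\rank (Ak i))}| = \sum_(k < K) rrank R (B k).
    by apply: eq_bigr => k _; rewrite card_ord (hAk k).2.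
  move: hr; set s := (\sum_(k < K) _)%N; lia.
pose U k := col_base (Ak k); pose V k := row_base (Ak k).
pose al (i : 'I_N) (p : T) : R := if p.2 then (U (tag p.1) i (tagged p.1) + V (tag p.1) (tagged p.1) i) / 2
    else (U (tag p.1) i (tagged p.1) - V (tag p.1) (tagged p.1) i) / 2.
pose be (i : 'I_N) (p : T) : R := U (tag p.1) i (tagged p.1).
pose CA (k : 'I_K) (p : T) : R := if p.2 then (k == tag p.1)%:R else - (k == tag p.1)%:R.
pose CB (k : 'I_K) (p : T) : R := if p.2 then 0 else (k == tag p.1)%:R.
apply: (@planes_consist R N K r B T hT al be CA CB).
have key : forall k i j, \sum_(p : T) ((al i p * al j p + be i p * be j p) * CA k p
               + (al i p * be j p - be i p * al j p) * CB k p) = Ak k i j.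
  move=> k i j.
  rewrite -(pair_bigA _ (fun x b => ((al i (x, b) * al j (x, b) + be i (x, b) * be j (x, b)) * CA k (x, b)
               + (al i (x, b) * be j (x, b) - be i (x, b) * al j (x, b)) * CB k (x, b)))) /=.
  under eq_bigr => x _ do rewrite big_bool /=.
  transitivity (\sum_(x : {k : 'I_K & 'I_(\rank (Ak k))})
      (k == tag x)%:R * (U (tag x) i (tagged x) * V (tag x) (tagged x) j)).
    apply: eq_bigr => x _; by rewrite /al /be /CA /CB /=; field.
  rewrite -(@sig_big_dep _ _ _ 'I_K (fun k' => 'I_(\rank (Ak k'))) xpredT (fun k' => xpredT)
      (fun k' l => (k == k')%:R * (U k' i l * V k' l j))) /=.
  under eq_bigr => k' _ do rewrite -mulr_sumr.
  rewrite (sum_pick _ _ k (fun k' => \sum_(l < \rank (Ak k')) U k' i l * V k' l j)).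
  by have := mulmx_base (Ak k); move/matrixP/(_ i j); rewrite mxE => <-.
move=> k i j i' j' h1 h2; rewrite !key.
have e : forall a b, B k a b = (1 / 2 <= Ak k a b).
  by move=> a b; rewrite -(hAk k).1 mxE.
move: h1 h2; rewrite !e => h1 /negbT; rewrite -ltNge => h2.
exact: lt_le_trans h2 h1.
Qed.

Lemma branchA (R : realType) N K (B : 'I_K -> 'M[bool]_N) r :
  (2 * K * N + 1 <= r)%N ->
  exists P : 'I_K -> 'M[nat]_N, in_pi_HolE R r P /\ consistent B P.
Proof.
move=> hr.
pose T := ('I_K * 'I_N)%type.
have hT : (2 * #|{: T}| < r)%N by rewrite card_prod !card_ord; lia.
pose M : R := N%:R + 1.
pose bb k a b : R := (B k a b)%:R.
pose s k a : R := if B k a a then 1 else -1.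
pose al (i : 'I_N) (p : T) : R := (i == p.2)%:R * M + s p.1 p.2 / 2 * bb p.1 p.2 i.
pose be (i : 'I_N) (p : T) : R := bb p.1 p.2 i / 2.
pose CA (k : 'I_K) (p : T) : R := (k == p.1)%:R * s p.1 p.2.
pose CB (k : 'I_K) (p : T) : R := (k == p.1)%:R.
apply: (@planes_consist R N K r B T hT al be CA CB).
pose Eh k i j := \sum_(i' < N) s k i' / 2 * bb k i' i * bb k i' j.
have key : forall k i j, \sum_(p : T) ((al i p * al j p + be i p * be j p) * CA k p
               + (al i p * be j p - be i p * al j p) * CB k p)
   = (j == i)%:R * s k i * M ^+ 2 + M * bb k i j + Eh k i j.
  move=> k i j.
  rewrite -(pair_bigA _ (fun k' i' => ((al i (k', i') * al j (k', i') + be i (k', i') * be j (k', i')) * CA k (k', i')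
               + (al i (k', i') * be j (k', i') - be i (k', i') * al j (k', i')) * CB k (k', i')))) /=.
  transitivity (\sum_(k' < K) (k == k')%:R * \sum_(i' < N)
     ((i == i')%:R * ((j == i')%:R * s k' i' * M ^+ 2 + M * bb k' i' j) + s k' i' / 2 * bb k' i' i * bb k' i' j)).
    apply: eq_bigr => k' _; rewrite mulr_sumr; apply: eq_bigr => i' _.
    by rewrite /al /be /CA /CB /= /s; case: (B k' i' i'); field.
  by rewrite sum_pick big_split /= sum_pick.
have hE : forall k i j, - (N%:R / 2) <= Eh k i j <= N%:R / 2.
  move=> k i j; have hb : forall x : 'I_N, - (1 / 2) <= s k x / 2 * bb k x i * bb k x j <= 1 / 2.
    move=> x; rewrite /s /bb; case: (B k x x); case: (B k x i); case: (B k x j) => /=; lra.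
  apply/andP; split.
    have -> : - (N%:R / 2) = \sum_(x < N) (- (1 / 2)) :> R.
      by rewrite sumr_const card_ord -mulr_natl; field.
    by apply: ler_sum => x _; case/andP: (hb x).
  have -> : N%:R / 2 = \sum_(x < N) (1 / 2) :> R.
    by rewrite sumr_const card_ord -mulr_natl; field.
  by apply: ler_sum => x _; case/andP: (hb x).
move=> k i j i' j' h1 h2; rewrite !key.
have hM : M = N%:R + 1 by [].
have hN : (0 : R) <= N%:R by [].
have hM2 : (0 : R) <= M ^+ 2 by rewrite sqr_ge0.
case/andP: (hE k i j) => e1 e2; case/andP: (hE k i' j') => e3 e4.
have hb1 : bb k i j = 1 by rewrite /bb h1.
have hb2 : bb k i' j' = 0 by rewrite /bb h2.
rewrite hb1 hb2.
have L : (j' == i')%:R * s k i' * M ^+ 2 <= 0.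
  case: eqP => [e|_]; last by rewrite mul0r mul0r.
  by move: h2; rewrite e /s => ->; rewrite mul1r mulN1r oppr_le0.
have L2 : 0 <= (j == i)%:R * s k i * M ^+ 2.
  case: eqP => [e|_]; last by rewrite mul0r mul0r.
  by move: h1; rewrite e /s => ->; rewrite mul1r mul1r.
lra.
Qed.

Theorem corollary4 (R : realType) (N K : nat) (hN : (2 <= N)%N) (hK : (1 <= K)%N)
  (B : 'I_K -> 'M[bool]_N) (r : nat) (hr : (0 < r)%N)
  (hmin : (minn (2 * K * N + 1) (4 * (\sum_(k < K) rrank R (B k)) + 1) <= r)%N) :
  exists P : 'I_K -> 'M[nat]_N, in_pi_HolE R r P /\ consistent B P.
Proof.
move: hmin; rewrite geq_min => /orP [h|h].
  exact: branchA.
exact: branchB.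
Qed.
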